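(* Let $\mathbb{F}\subseteq\mathbb{C}$ be a subfield closed under complex conjugation, let $m\ge 1$, $N\ge1$, and let $\mathbf{A}(z)=\sum_{k=0}^N A_kz^k$ with $A_k\in\mathbb{F}^{m\times m}$ and $A_N\neq 0$ satisfy $\mathbf{A}(z)\widetilde{\mathbf{A}}(z)=I_m$ for all $z\in\mathbb{C}\setminus\{0\}$, where $\widetilde{\mathbf{A}}(z)=\sum_{k=0}^N A_k^*z^{-k}$. Then $\det\mathbf{A}(z)=c\,z^d$ for some constant $c\ne0$ and integer $d\ge0$, and: (a) $d\ge N$; (b) $d=N$ if and only if $\operatorname{rank}(A_0)=m-1$.
   Context: $A^*$ denotes the conjugate transpose of a matrix $A$. *)

(* Defs.v *)
(* The complex field C is modelled as R[i] = complex R for an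
   arbitrary realType R (every realType is isomorphic to the reals). *)
From HB Require Import structures.
From mathcomp Require Import all_boot all_order all_algebra.
From mathcomp Require Import reals complex.
Set Implicit Arguments. Unset Strict Implicit. Unset Printing Implicit Defensive.
Import Order.TTheory GRing.Theory Num.Theory.
Local Open Scope ring_scope.

Definition ctrmx (C : numClosedFieldType) (m n : nat) (A : 'M[C]_(m, n)) : 'M[C]_(n, m) :=
  (map_mx Num.conj A)^T.

Definition mxpoly_eval (C : numClosedFieldType) (m N : nat) (A : nat -> 'M[C]_m) (z : C) : 'M[C]_m :=
  \sum_(k < N.+1) (z ^+ k) *: A k.

Definition mxpoly_tilde (C : numClosedFieldType) (m N : nat) (A : nat -> 'M[C]_m) (z : C) : 'M[C]_m :=
  \sum_(k < N.+1) (z ^- k) *: ctrmx (A k).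

(* Main.v *)
Require Import Defs.
From HB Require Import structures.
From mathcomp Require Import all_boot all_order all_algebra.
From mathcomp Require Import reals complex.
Import Order.TTheory GRing.Theory Num.Theory.
Local Open Scope ring_scope.
Local Open Scope complex_scope.
Set Implicit Arguments. Unset Strict Implicit.
Lemma row'_rank (F : fieldType) p q (K : 'M[F]_(p.+1, q)) :
  (\rank K <= p)%N -> exists i, \rank (row' i K) = \rank K.
Proof.
move=> hr; pose f := maxrankfun K.
have : ~~ ('I_p.+1 \subset codom f).
  apply/negP => /subset_leq_card; rewrite card_ord => h.
  have := leq_trans h (card_size _); rewrite size_codom card_ord.
  by rewrite ltnNge hr.
case/subsetPn => i _ hi; exists i.
apply/eqP; rewrite eqn_leq mxrankS ?row'Esub ?rowsub_sub //=.
rewrite -(eq_maxrowsub K).1 mxrankS //.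
apply/row_subP => k; rewrite row_rowsub.
have hne : i != f k by apply: contraNneq hi => ->; apply: codom_f.
have [l hl _] := unlift_some hne.
rewrite hl; have -> : row (lift i l) K = row l (rowsub (lift i) K).
  by apply/rowP => b; rewrite !mxE.
exact: row_sub.
Qed.

Lemma adj_neq0 (F : fieldType) n (M : 'M[F]_n.+1) : \rank M = n -> \adj M != 0.
Proof.
move=> hr.
have [i hi] := row'_rank (eq_leq hr).
have hr2 : (\rank (row' i M)^T <= n)%N by rewrite mxrank_tr hi hr.
have [j hj] := row'_rank hr2.
have hu : col' j (row' i M) \in unitmx.
  by rewrite -row_free_unit /row_free -mxrank_tr tr_col' hj mxrank_tr hi hr.
apply/eqP => /matrixP /(_ j i); rewrite !mxE /cofactor => /eqP.
rewrite mulf_eq0 signr_eq0 /=.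
have -> : row' i (col' j M) = col' j (row' i M) by apply/matrixP => a b; rewrite !mxE.
by move: hu; rewrite unitmxE unitfE => /negPf ->.
Qed.

Lemma adj_eq0 (F : fieldType) n (M : 'M[F]_n.+1) : (\rank M < n)%N -> \adj M = 0.
Proof.
move=> hr; apply/matrixP => a b; rewrite !mxE /cofactor.
suff -> : \det (row' b (col' a M)) = 0 by rewrite mulr0.
apply/eqP; rewrite -[_ == 0]negbK -unitfE -unitmxE -row_free_unit /row_free.
rewrite neq_ltn; apply/orP; left.
apply: (leq_ltn_trans _ hr); rewrite row'Esub (leq_trans (mxrankS (rowsub_sub _ _))) //.
by rewrite -mxrank_tr tr_col' -[leqRHS]mxrank_tr mxrankS // row'Esub rowsub_sub.
Qed.

Lemma adj_rank (F : fieldType) m (M : 'M[F]_m) : (0 < m)%N -> \det M = 0 ->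
  (\adj M != 0 <-> \rank M = (m-1)%N).
Proof.
case: m M => // n M _ hd; rewrite subn1 /=.
have hr : (\rank M <= n)%N.
  rewrite -ltnS ltn_neqAle rank_leq_row andbT.
  by apply/eqP => /eqP; rewrite -/(row_free M) row_free_unit unitmxE unitfE hd eqxx.
split => [h|]; last exact: adj_neq0.
apply/eqP; rewrite eqn_leq hr leqNgt; apply/negP => /adj_eq0 h2.
by rewrite h2 eqxx in h.
Qed.
Lemma ev_sum (F : comNzRingType) m n (B : nat -> 'M[F]_m) (e : nat -> nat) z :
  map_mx (horner_eval z) (\sum_(k < n) 'X^(e k) *: map_mx polyC (B k))
  = \sum_(k < n) z ^+ (e k) *: B k.
Proof.
apply/matrixP => a b; rewrite !mxE !summxE rmorph_sum; apply: eq_bigr => k _.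
rewrite !mxE /=. by rewrite /horner_eval hornerM hornerXn hornerC. Qed.

Lemma poly_vanish (F : numDomainType) (p : {poly F}) :
  (forall z, z != 0 -> p.[z] = 0) -> p = 0.
Proof.
move=> H; apply/eqP; apply: contraT => p0.
have h := max_poly_roots p0 (rs := [seq i.+1%:R | i <- iota 0 (size p)]).
rewrite size_map size_iota ltnn in h; apply: h.
  by apply/allP => x /mapP [i _ ->]; apply/rootP; apply: H; rewrite pnatr_eq0.
by rewrite map_inj_uniq ?iota_uniq // => i j /eqP; rewrite eqr_nat eqSS => /eqP.
Qed.

Lemma mx_vanish (F : numDomainType) m n (M : 'M[{poly F}]_(m, n)) :
  (forall z, z != 0 -> map_mx (horner_eval z) M = 0) -> M = 0.
Proof.
move=> H; apply/matrixP => a b; rewrite mxE; apply: poly_vanish => z z0.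
by have := congr1 (fun X : 'M[F]_(m,n) => X a b) (H z z0); rewrite !mxE horner_evalE.
Qed.

Lemma prod_const_seq (F : comNzRingType) (T : Type) (s : seq T) (c : F) :
  \prod_(z <- s) c = c ^+ size s.
Proof. by elim: s => [|x s IH]; rewrite ?big_nil ?big_cons ?expr0 // IH exprS. Qed.
Unset Implicit Arguments.
Theorem lemma1 (R : realType) (F : {pred R[i]})
  (F_subfield : divring_closed F)
  (F_conj : forall x : R[i], x \in F -> x^* \in F)
  (m N : nat) (m_ge1 : (1 <= m)%N) (N_ge1 : (1 <= N)%N)
  (A : nat -> 'M[R[i]]_m)
  (A_F : forall k i j, A k i j \in F)
  (A_N : A N != 0)
  (para : forall z : R[i], z != 0 ->
     mxpoly_eval N A z *m mxpoly_tilde N A z = 1%:M) :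
  exists (c : R[i]) (d : nat),
    [/\ c != 0,
        (forall z : R[i], \det (mxpoly_eval N A z) = c * z ^+ d),
        (N <= d)%N
      & (d = N <-> \rank (A 0%N) = (m - 1)%N)].
Proof.
pose P : 'M[{poly R[i]}]_m := \sum_(k < N.+1) ('X^k *: map_mx polyC (A k)).
pose Q : 'M[{poly R[i]}]_m :=
  \sum_(k < N.+1) ('X^(N - k) *: map_mx polyC (ctrmx (A k))).
have evP z : map_mx (horner_eval z) P = mxpoly_eval N A z by rewrite (ev_sum N.+1 A (fun k => k)).
have evQ z : z != 0 -> map_mx (horner_eval z) Q = z ^+ N *: mxpoly_tilde N A z.
  move=> z0; rewrite (ev_sum N.+1 (fun k => ctrmx (A k)) (fun k => (N - k)%N)) /mxpoly_tilde scaler_sumr; apply: eq_bigr => k _.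
  rewrite scalerA; congr (_ *: _).
  have hk : (k <= N)%N by rewrite -ltnS.
  have e : z ^+ N = z ^+ (N - k) * z ^+ k by rewrite -exprD subnK.
  by rewrite e mulfK // expf_neq0.
have PQ : P *m Q = 'X^N%:M.
  apply/eqP; rewrite -subr_eq0; apply/eqP; apply: mx_vanish => z z0.
  apply/matrixP => a b; rewrite !mxE rmorphB /=.
  have := congr1 (fun X : 'M[R[i]]_m => X a b) (map_mxM (horner_eval z) P Q).
  rewrite evP evQ // -scalemxAr para // !mxE /= => ->.
  rewrite /horner_eval /= hornerMn hornerXn mulr_natr subrr. done. 
pose p := \det P.
have pq : p * \det Q = 'X^(N * m).
  by rewrite /p -det_mulmx PQ det_scalar exprM.
have Xn0 n : ('X^n : {poly R[i]}) != 0 by rewrite monic_neq0 // monicXn.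
have p0 : p != 0 by apply: contra_neq (Xn0 (N * m)%N) => h; rewrite -pq h mul0r.
have rootp z : p.[z] = 0 -> z = 0.
  move=> hz; have := congr1 (horner^~ z) pq; rewrite /= hornerM hz mul0r hornerXn.
  by move/eqP; rewrite eq_sym expf_eq0 => /andP [_ /eqP].
have [rs Hrs] := closed_field_poly_normal p.
pose c := lead_coef p; pose d := size rs.
have pE : p = c *: 'X^d.
  rewrite {1}Hrs; congr (_ *: _); rewrite /d -(prod_const_seq rs) big_seq [RHS]big_seq.
  apply: eq_bigr => z zr; suff -> : z = 0 by rewrite subr0.
  apply: rootp; rewrite Hrs hornerZ; apply/eqP.
  by rewrite mulf_eq0 -/(root _ z) root_prod_XsubC zr orbT.
have c0 : c != 0 by rewrite lead_coef_eq0.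
have detE z : \det (mxpoly_eval N A z) = c * z ^+ d.
  by rewrite -evP det_map_mx /= -/p pE /horner_eval /= hornerZ hornerXn.
have AQ : (c *: 'X^d) *: Q = 'X^N *: \adj P.
  have := congr1 (mulmx (\adj P)) PQ.
  by rewrite mulmxA mul_adj_mx -/p pE mul_scalar_mx mul_mx_scalar.
have AQe a b : 'X^d * (c%:P * Q a b) = 'X^N * \adj P a b.
  have := congr1 (fun X : 'M[{poly R[i]}]_m => X a b) AQ; rewrite !mxE => <-.
  by rewrite -mul_polyC mulrA [c%:P * _]mulrC.
have Q0 a b : (Q a b)`_0 = ctrmx (A N) a b.
  have := congr1 (fun X : 'M[R[i]]_m => X a b)
    (ev_sum N.+1 (fun k => ctrmx (A k)) (fun k => (N - k)%N) 0).
  rewrite -/Q mxE /horner_eval /= => h; rewrite -horner_coef0 h.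
  rewrite summxE big_ord_recr /= subnn expr0 big1 ?add0r ?mxE ?mul1r // => k _.
  by rewrite mxE expr0n subn_eq0 leqNgt ltn_ord mul0r.
have e0 : mxpoly_eval N A 0 = A 0%N.
  rewrite /mxpoly_eval big_ord_recl expr0 scale1r big1 ?addr0 // => k _.
  by rewrite expr0n /= scale0r.
have adj0 a b : (\adj P a b)`_0 = \adj (A 0%N) a b.
  by rewrite -horner_coef0 -e0 -evP -map_mx_adj [RHS]mxE.
have ctr0 : ctrmx (A N) != 0.
  apply: contra A_N => /eqP h; apply/eqP/matrixP => a b.
  have := congr1 (fun X : 'M[R[i]]_m => X b a) h; rewrite !mxE => /eqP.
  by rewrite conjC_eq0 => /eqP.
have hNd : (N <= d)%N.
  rewrite leqNgt; apply/negP => hdN; move/negP: ctr0; apply; apply/eqP/matrixP => a b.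
  have := congr1 (fun q : {poly R[i]} => q`_d) (AQe a b).
  rewrite coefXnM ltnn subnn coefXnM hdN coefCM Q0 mxE => /eqP.
  by rewrite mulf_eq0 (negPf c0) /= => /eqP ->; rewrite mxE.
have adjE : \adj (A 0%N) = if (N < d)%N then 0 else c *: ctrmx (A N).
  apply/matrixP => a b; rewrite -adj0.
  have := congr1 (fun q : {poly R[i]} => q`_N) (AQe a b).
  rewrite !coefXnM ltnn subnn => <-.
  case: ltnP => h; first by rewrite mxE.
  have -> : (N - d = 0)%N by apply/eqP; rewrite subn_eq0.
  by rewrite coefCM Q0 [RHS]mxE.
have detA0 : \det (A 0%N) = 0.
  rewrite -e0 detE expr0n; suff /negPf -> : d != 0%N by rewrite mulr0.
  by rewrite -lt0n (leq_trans N_ge1 hNd).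
exists c, d; split => //.
rewrite -(adj_rank m_ge1 detA0) adjE; split.
  by move=> ->; rewrite ltnn scaler_eq0 negb_or c0.
by case: ltnP => h; [rewrite eqxx | move=> _; apply/eqP; rewrite eqn_leq h hNd].
Qed.
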